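(* Let $G=(V,E)$ be a simple undirected graph with vertex set $V$ and edge set $E$, let $A$ be its vertex-edge incidence matrix, and let $k>4$ be an integer. Suppose every connected component of $G$ has at least four vertices, $|E| = \binom{k}{2}$, and $\operatorname{rank}(A) = k$. Then $G$ has exactly $|V| = k$ vertices.
   Context: The vertex-edge incidence matrix $A$ of $G$ has rows indexed by $V$ and columns indexed by $E$, with entry $a_{ie} = 1$ if vertex $i$ is an endpoint of edge $e$ and $0$ otherwise; its rank is taken over the real (equivalently rational) numbers. *)

(* Defs.v *)
From HB Require Import structures.
From mathcomp Require Import all_boot all_order all_algebra.
Set Implicit Arguments. Unset Strict Implicit. Unset Printing Implicit Defensive.
Import GRing.Theory Num.Theory.

(* A simple undirected graph on a finite vertex type V is given by a
   symmetric irreflexive adjacency relation e : rel V. *)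

Definition edges (V : finType) (e : rel V) : {set {set V}} :=
  [set E : {set V} | [exists x : V, exists y : V, e x y && (E == [set x; y])]].

Definition incidence (V : finType) (e : rel V) : 'M[rat]_(#|V|, #|edges e|) :=
  \matrix_(i < #|V|, j < #|edges e|)
     (if enum_val i \in (enum_val j : {set V}) then 1%R else 0%R).

Definition component (V : finType) (e : rel V) (v : V) : {set V} :=
  [set w | connect e v w].

(* Main.v *)
Require Import Defs.
From mathcomp Require Import all_boot all_order all_algebra.
From mathcomp Require Import zify ring lra.
Set Implicit Arguments. Unset Strict Implicit. Unset Printing Implicit Defensive.

Lemma sqE p q : (p + q) * (p + q - 1) = p * (p - 1) + q * (q - 1) + 2 * (p * q).
Proof.
case: p => [|p]; first by rewrite add0n !mul0n !addn0.
case: q => [|q]; first by rewrite !addn0 !muln0 !addn0.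
rewrite addSn !subn1 /= addnS /=.
ring.
Qed.

Lemma L3 (I : eqType) (l : seq I) (a : I -> nat) :
  (forall i, i \in l -> 3 <= a i) -> l <> [::] ->
  \sum_(i <- l) (a i * (a i - 1)) + 18 * size l <=
  (\sum_(i <- l) a i) * (\sum_(i <- l) a i - 1) + 18.
Proof.
elim: l => [//|x l IH] H _.
case: l IH H => [|y l] IH H.
  by rewrite !big_cons !big_nil /=; lia.
have Hx : 3 <= a x by apply: H; rewrite mem_head.
have Hy : 3 <= a y by apply: H; rewrite inE mem_head orbT.
have H2 : forall i, i \in y :: l -> 3 <= a i by move=> i hi; apply: H; rewrite inE hi orbT.
have := IH H2 (fun h => ltac:(discriminate)).
have Sge : 3 <= \sum_(i <- y :: l) a i by rewrite big_cons; lia.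
rewrite (big_cons _ _ x) (big_cons _ _ x) [size (x :: _)]/=.
move: Sge.
set S := \sum_(i <- y :: l) a i.
set Q := \sum_(i <- y :: l) (a i * (a i - 1)).
set z := size (y :: l).
move=> Sge IH'.
have E := sqE (a x) S.
have F : 9 <= a x * S by apply: (leq_mul Hx Sge).
rewrite E; move: IH' F; rewrite /z /=; move: (a x * (a x - 1)) (S * (S - 1)) (a x * S) => u v w; lia.
Qed.

Lemma gbound m g (s : bool) : 4 <= m -> g <= m * (m - 1) -> (s -> 2 * g <= m ^ 2) ->
  g <= (m - s) * (m - s - 1) + 2 * s.
Proof.
move=> m4 H1; case: s => /= [H3|_]; last by rewrite subn0 muln0 addn0.
have {}H3 := H3 isT.
move: H1 H3; rewrite -mulnn; case: m m4 => [|[|[|[|p]]]] //= _.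
rewrite !subn1 /=. nia.
Qed.

Lemma NL (I : eqType) (l : seq I) (m g : I -> nat) (s : I -> bool) (k : nat) :
  (forall i, i \in l -> [/\ 4 <= m i, g i <= m i * (m i - 1) & (s i -> 2 * g i <= m i ^ 2)]) ->
  4 < k -> \sum_(i <- l) g i = k * (k - 1) -> k <= \sum_(i <- l) m i ->
  \sum_(i <- l) m i <= k + \sum_(i <- l) (s i : nat) -> \sum_(i <- l) m i = k.
Proof.
case: l => [|r [|r2 l]] H k4.
- rewrite !big_nil; lia.
- rewrite !big_cons !big_nil !addn0.
  have [H1 H2 H3] := H r (mem_head _ _).
  case: (s r) H3 => H3 /= hg h1 h2; last by lia.
  have {}H3 := H3 isT.
  have [->|mk] : m r = k \/ m r = k.+1 by lia.
    by [].
  move: H3; rewrite mk hg -mulnn.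
  case: k k4 {hg h1 h2 mk} => [|[|[|[|[|p]]]]] //= _.
  rewrite !subn1 /=. nia.
- set l0 := [:: r, r2 & l].
  move=> hg h1 h2.
  set a := fun i => m i - s i.
  have Ha : forall i, i \in l0 -> 3 <= a i.
    by move=> i /H[H1 _ _]; rewrite /a; case: (s i) => /=; lia.
  have Hg : \sum_(i <- l0) g i <= \sum_(i <- l0) (a i * (a i - 1)) + 2 * \sum_(i <- l0) (s i : nat).
    rewrite big_distrr /= -big_split /=.
    rewrite big_seq_cond [X in _ <= X]big_seq_cond.
    apply: leq_sum => i /andP[/H[H1 H2 H3] _]; exact: gbound.
  have Hm : \sum_(i <- l0) a i + \sum_(i <- l0) (s i : nat) = \sum_(i <- l0) m i.
    rewrite -big_split /= big_seq_cond [X in _ = X]big_seq_cond.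
    apply: eq_bigr => i /andP[/H[H1 _ _] _]; rewrite /a; case: (s i) => /=; lia.
  have Hs : \sum_(i <- l0) (s i : nat) <= size l0.
    rewrite -sum1_size; apply: leq_sum => i _; by case: (s i).
  have H3 := @L3 _ l0 a Ha (fun h => ltac:(discriminate)).
  have Hsz : 2 <= size l0 by [].
  have HA : \sum_(i <- l0) a i <= k by lia.
  have HAA : (\sum_(i <- l0) a i) * (\sum_(i <- l0) a i - 1) <= k * (k - 1).
    by apply: leq_mul => //; apply: leq_sub2r.
  move: Hg Hm Hs H3 Hsz HA HAA hg h1 h2.
  move: (\sum_(i <- l0) g i) (\sum_(i <- l0) (a i * (a i - 1))) (\sum_(i <- l0) (s i : nat))
        ((\sum_(i <- l0) a i) * (\sum_(i <- l0) a i - 1)) (k * (k - 1)) (size l0)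
        (\sum_(i <- l0) m i) (\sum_(i <- l0) a i).
  move=> *; lia.
Qed.

Import Order.TTheory GRing.Theory Num.Theory.
Local Open Scope ring_scope.
Section S.
Variables (V : finType) (e : rel V).
Hypotheses (esym : symmetric e) (eirr : irreflexive e).
Definition ut (u : 'rV[rat]_#|V|) (v : V) := u 0 (enum_rank v).

Lemma ker_edge u x y : (u <= kermx (incidence e))%MS -> e x y -> ut u x + ut u y = 0.
Proof.
move=> /sub_kermxP uA exy.
have Ex : [set x; y] \in edges e.
  by rewrite inE; apply/existsP; exists x; apply/existsP; exists y; rewrite exy eqxx.
move/matrixP: uA => /(_ 0 (enum_rank_in Ex [set x;y])).
rewrite !mxE (reindex (@enum_rank V)) /=; last first.
  by exists enum_val => i _; [rewrite enum_rankK | rewrite enum_valK].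
under eq_bigr => v _ do rewrite mxE enum_rankK enum_rankK_in //.
have xy : x != y by apply: contraTneq exy => ->; rewrite eirr.
rewrite (bigD1 x) // (bigD1 y) /=; last by rewrite eq_sym.
rewrite big1 ?set21 ?set22 ?mulr1 ?addr0 //.
move=> v /andP[vx vy]; rewrite !inE (negbTE vx) (negbTE vy) mulr0 //.
Qed.

Definition Kr := kermx (incidence e).
Definition sp (v : V) : bool := col (enum_rank v) Kr != 0.

Lemma sp_of u v : (u <= Kr)%MS -> ut u v != 0 -> sp v.
Proof.
move=> /submxP[D ->]; apply: contra => /eqP c0.
rewrite /ut mxE; apply/eqP/big1 => i _.
have := congr1 (fun M : 'cV_#|V| => M i 0) c0; rewrite !mxE => ->; exact: mulr0.
Qed.

Lemma sp_wit v : sp v -> exists2 u, (u <= Kr)%MS & ut u v != 0.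
Proof.
move=> spv.
have [i Hi] : exists i, Kr i (enum_rank v) != 0.
  apply/existsP; apply: contraNT spv; rewrite negb_exists => /forallP H.
  apply/eqP/matrixP => i j; rewrite mxE [X in _ = X]mxE; apply/eqP; by move: (H i); rewrite negbK.
exists (row i Kr); first exact: row_sub.
by rewrite /ut mxE.
Qed.

Lemma zero_prop u x y : (u <= Kr)%MS -> connect e x y -> (ut u x == 0) = (ut u y == 0).
Proof.
move=> uK; apply: (@closed_connect _ e [pred v | ut u v == 0]) => a b eab /=.
rewrite !inE. have := ker_edge uK eab; move/eqP; rewrite addr_eq0 => /eqP ->.
by rewrite oppr_eq0.
Qed.

Definition Sroots := [set r | (fingraph.root e r == r) && sp r].

Lemma rank_bound : (#|V| - \rank (incidence e) <= #|Sroots|)%N.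
Proof.
have csym := sym_connect_sym esym.
pose P : 'M[rat]_(#|V|, #|Sroots|) :=
  \matrix_(i, j) (if enum_val i == (enum_val j : V) then 1 else 0).
have uP : forall (u : 'rV_#|V|) j, (u *m P) 0 j = ut u (enum_val j).
  move=> u j; rewrite mxE (reindex (@enum_rank V)) /=; last first.
    by exists enum_val => i _; [rewrite enum_rankK | rewrite enum_valK].
  rewrite (bigD1 (enum_val j : V)) //= big1 ?addr0.
    by rewrite mxE enum_rankK eqxx mulr1.
  by move=> w wj; rewrite mxE enum_rankK (negbTE wj) mulr0.
rewrite -mxrank_ker -(mxrank_mul_ker _ P).
have -> : \rank (Kr :&: kermx P) = 0%N.
  apply/eqP; rewrite mxrank_eq0; apply/rowV0P => v.
  rewrite sub_capmx => /andP[vK /sub_kermxP vP].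
  have H0 : forall r, r \in Sroots -> ut v r = 0.
    move=> r rS; have := uP v (enum_rank_in rS r); rewrite vP enum_rankK_in // mxE.
    by move=> <-.
  have Hall : forall w, ut v w = 0.
    move=> w; apply/eqP; apply: contraT => nz.
    have rw := connect_root e w.
    have nzr : ut v (fingraph.root e w) != 0 by rewrite -(zero_prop vK rw).
    have Sr : fingraph.root e w \in Sroots.
      by rewrite inE root_root // eqxx (sp_of vK nzr).
    by rewrite H0 // eqxx in nzr.
  apply/rowP => i; rewrite mxE; have := Hall (enum_val i); by rewrite /ut enum_valK.
by rewrite addn0; apply: rank_leq_col.
Qed.
End S.

Close Scope ring_scope.
Section T.
Variables (V : finType) (e : rel V).
Hypotheses (esym : symmetric e) (eirr : irreflexive e).

Definition deg v := #|[set w | e v w]|.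

Lemma deg_nat v : deg v = \sum_w (e v w : nat).
Proof.
rewrite /deg -sum1_card big_mkcond /=; apply: eq_bigr => w _; rewrite inE; by case: (e v w).
Qed.

Lemma handshake : \sum_v deg v = 2 * #|edges e|.
Proof.
under eq_bigr => v _ do rewrite deg_nat.
rewrite pair_big /=.
pose f (p : V * V) := [set p.1; p.2].
have -> : \sum_(p : V * V) (e p.1 p.2 : nat) = \sum_(p | e p.1 p.2) 1.
  by rewrite [RHS]big_mkcond /=; apply: eq_bigr => p _; case: (e p.1 p.2).
rewrite (partition_big f (mem (edges e))) /=; last first.
  move=> p epp; rewrite inE; apply/existsP; exists p.1; apply/existsP; exists p.2.
  by rewrite epp eqxx.
rewrite mulnC -sum_nat_const; apply: eq_bigr => E.
rewrite inE => /existsP[x /existsP[y /andP[exy /eqP EE]]].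
have xy : x != y by apply: contraTneq exy => ->; rewrite eirr.
rewrite (eq_bigl (mem [set (x, y); (y, x)])); last first.
  move=> [a b] /=; rewrite /f /= !inE EE.
  apply/andP/orP.
  - move=> [eab /eqP ES].
    have ab : a != b by apply: contraTneq eab => ->; rewrite eirr.
    have ain : a \in [set x; y] by rewrite -ES set21.
    have bin : b \in [set x; y] by rewrite -ES set22.
    move: ain bin; rewrite !inE => /orP[]/eqP Ha /orP[]/eqP Hb; subst.
    + by rewrite eqxx in ab.
    + by left.
    + by right.
    + by rewrite eqxx in ab.
  - case=> /eqP[-> ->]; split=> //; first by rewrite esym.
    by rewrite setUC.
rewrite sum1_card cards2.
by case: eqP => // -[] /eqP; rewrite (negbTE xy).
Qed.

Definition Cr r := [set v | fingraph.root e v == r].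
Definition g r := \sum_(v in Cr r) deg v.
Definition mr r := #|Cr r|.

Lemma csym : connect_sym e.
Proof. exact: sym_connect_sym. Qed.

Lemma Cr_conn r v : fingraph.root e r = r -> (v \in Cr r) = connect e r v.
Proof.
move=> rr; rewrite inE -{1}rr root_connect; last exact: csym.
by rewrite csym.
Qed.

Lemma deg_sub r v : fingraph.root e r = r -> v \in Cr r -> [set w | e v w] \subset Cr r :\ v.
Proof.
move=> rr vC; apply/subsetP => w; rewrite inE => evw.
rewrite in_setD1; apply/andP; split.
  by apply: contraTneq evw => ->; rewrite eirr.
move: vC; rewrite !Cr_conn // => crv; apply: connect_trans crv _; exact: connect1.
Qed.

Lemma g_le r : fingraph.root e r = r -> g r <= mr r * (mr r - 1).
Proof.
move=> rr; rewrite /g /mr -sum_nat_const; apply: leq_sum => v vC.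
have := subset_leq_card (deg_sub rr vC); rewrite /deg.
by rewrite [#|Cr r|](cardsD1 v) vC add1n subn1.
Qed.

Lemma sum_comp (F : V -> nat) : \sum_v F v = \sum_(r | fingraph.root e r == r) \sum_(v in Cr r) F v.
Proof.
rewrite (partition_big (fingraph.root e) (fun r => fingraph.root e r == r)) /=.
  apply: eq_bigr => r _; apply: eq_bigl => v; by rewrite inE.
by move=> v _; rewrite root_root //; exact: csym.
Qed.


Lemma g_sp r : fingraph.root e r = r -> sp e r -> 2 * g r <= mr r ^ 2.
Proof.
move=> rr /sp_wit[u uK ur].
have nz : forall v, v \in Cr r -> (ut u v != 0)%R.
  move=> v; rewrite Cr_conn // => crv; by rewrite -(zero_prop eirr uK crv).
have opp : forall v w, e v w -> (ut u w = - ut u v)%R.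
  move=> v w evw; have := ker_edge eirr uK evw; rewrite addrC; move/eqP.
  by rewrite addr_eq0 => /eqP.
pose pos := fun v => (0 < ut u v)%R.
pose P := [set v in Cr r | pos v]; pose N := [set v in Cr r | ~~ pos v].
have Hsplit : forall F : V -> nat, \sum_(v in Cr r) F v = \sum_(v in P) F v + \sum_(v in N) F v.
  move=> F; rewrite (bigID pos) /=; congr (_ + _); apply: eq_bigl => v; by rewrite !inE.
have inC : forall v w, v \in Cr r -> e v w -> w \in Cr r.
  move=> v w vC evw; have := subsetP (deg_sub rr vC) w; rewrite inE evw in_setD1.
  by move=> /(_ isT) /andP[].
have HP : forall v, v \in P -> deg v <= #|N|.
  move=> v; rewrite inE => /andP[vC pv]; apply: subset_leq_card; apply/subsetP => w.
  rewrite inE => evw; rewrite inE (inC v w vC evw) /= /pos (opp _ _ evw).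
  rewrite /pos in pv; apply/negP => h.
  by move: h; rewrite oppr_gt0 ltNge (ltW pv).
have HN : forall v, v \in N -> deg v <= #|P|.
  move=> v; rewrite inE => /andP[vC pv]; apply: subset_leq_card; apply/subsetP => w.
  rewrite inE => evw; rewrite inE (inC v w vC evw) /= /pos (opp _ _ evw).
  by rewrite oppr_gt0 lt_neqAle (nz v vC) leNgt.
have Hg : g r <= #|P| * #|N| + #|N| * #|P|.
  rewrite /g Hsplit -!sum_nat_const; apply: leq_add; exact: leq_sum.
have Hm : mr r = #|P| + #|N|.
  by rewrite /mr -!sum1_card Hsplit.
rewrite Hm; move: Hg; move: (g r) #|P| #|N| => a b c Hg.
have := nat_Cauchy b c; case=> H1 _.
rewrite sqrnD (mulnC c b) in Hg *; lia.
Qed.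
End T.

Theorem lemma2 (V : finType) (e : rel V) (k : nat) :
  symmetric e -> irreflexive e ->
  4 < k ->
  (forall v : V, 4 <= #|component e v|) ->
  #|edges e| = 'C(k, 2) ->
  \rank (incidence e) = k ->
  #|V| = k.
Proof.
move=> esym eirr k4 Hc HE Hr.
have hk : k <= #|V| by rewrite -Hr rank_leq_row.
have hb := rank_bound esym eirr; rewrite Hr in hb.
have hS : #|Sroots e| = \sum_(r | fingraph.root e r == r) (sp e r : nat).
  rewrite -sum1_card big_mkcond [RHS]big_mkcond /=.
  apply: eq_bigr => r _; rewrite inE; by case: (fingraph.root e r == r); case: (sp e r).
have hn : #|V| = \sum_(r | fingraph.root e r == r) mr e r.
  rewrite -sum1_card (sum_comp esym); apply: eq_bigr => r _; by rewrite /mr sum1_card.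
have hg : \sum_(r | fingraph.root e r == r) g e r = k * (k - 1).
  rewrite /g -(sum_comp esym) handshake // HE.
  have := bin_ffact k 2; rewrite ffactnS ffactn1 (_ : 2`! = 2) // mulnC => ->.
  by rewrite subn1.
rewrite -big_filter in hS; rewrite -big_filter in hn; rewrite -big_filter in hg.
set l := [seq r <- index_enum V | fingraph.root e r == r] in hS hn hg.
have H1 : forall r, r \in l -> [/\ 4 <= mr e r, g e r <= mr e r * (mr e r - 1)
                                   & (sp e r -> 2 * g e r <= mr e r ^ 2)].
  move=> r; rewrite mem_filter => /andP[/eqP rr _]; split.
  - rewrite /mr (eq_card (B := component e r)) ?Hc // => v.
    by rewrite (Cr_conn esym) // inE.
  - exact: g_le.
  - exact: g_sp.
have h1 : k <= \sum_(i <- l) mr e i by rewrite -hn.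
have h2 : \sum_(i <- l) mr e i <= k + \sum_(i <- l) (sp e i : nat) by rewrite -hn -hS; lia.
rewrite hn; exact: (@NL V l (mr e) (g e) (sp e) k H1 k4 hg h1 h2).
Qed.
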